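(* For every integer $m\ge1$ and every smooth closed immersed planar curve $\gamma$, $$E_m[\gamma]\le\frac1{2m+1}L[\gamma]^{3/2}\|\mathcal K_m\|_{L^2(\gamma)},$$ equivalently $L[\gamma]^{2m+1}E_m[\gamma]\le\frac1{2m+1}L[\gamma]^{2m+5/2}\|\mathcal K_m\|_{L^2(\gamma)}$.
   Context: $s$ arclength, $k$ signed curvature, $k_{s^j}$ its $j$-th arclength derivative, $L[\gamma]$ length, $E_m[\gamma]=\frac12\int_\gamma k_{s^m}^2ds$, $\mathcal K_m=(-1)^{m+1}k_{s^{2m+2}}-\tfrac12 k\,k_{s^m}^2+k\sum_{r=1}^m(-1)^{r+1}k_{s^{m-r}}k_{s^{m+r}}$, and $\|\cdot\|_{L^2(\gamma)}$ is taken with respect to $ds$. *)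

(* Defs.v *)
From Stdlib Require Import Reals Lra.
From Coquelicot Require Import Coquelicot.
Open Scope R_scope.

Definition smooth (f : R -> R) : Prop :=
  forall (n : nat) (t : R), ex_derive (Derive_n f n) t.

Definition speed (gx gy : R -> R) (t : R) : R :=
  sqrt (Derive gx t ^ 2 + Derive gy t ^ 2).

Definition closed_immersed_smooth_curve (gx gy : R -> R) (T : R) : Prop :=
  0 < T /\ smooth gx /\ smooth gy /\
  (forall t, gx (t + T) = gx t /\ gy (t + T) = gy t) /\
  (forall t, speed gx gy t <> 0).

Definition d_s (gx gy : R -> R) (f : R -> R) : R -> R :=
  fun t => Derive f t / speed gx gy t.

Fixpoint d_s_n (gx gy : R -> R) (j : nat) (f : R -> R) : R -> R :=
  match j with
  | O => f
  | S j' => d_s gx gy (d_s_n gx gy j' f)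
  end.

Definition curv (gx gy : R -> R) (t : R) : R :=
  (Derive gx t * Derive_n gy 2 t - Derive gy t * Derive_n gx 2 t)
  / speed gx gy t ^ 3.

Definition k_s (gx gy : R -> R) (j : nat) : R -> R := d_s_n gx gy j (curv gx gy).

Definition length (gx gy : R -> R) (T : R) : R := RInt (speed gx gy) 0 T.

Definition int_ds (gx gy : R -> R) (T : R) (f : R -> R) : R :=
  RInt (fun t => f t * speed gx gy t) 0 T.

Definition energy (gx gy : R -> R) (T : R) (m : nat) : R :=
  / 2 * int_ds gx gy T (fun t => k_s gx gy m t ^ 2).

Definition Kop (gx gy : R -> R) (m : nat) (t : R) : R :=
  (-1) ^ (m + 1) * k_s gx gy (2 * m + 2) t
  - / 2 * curv gx gy t * k_s gx gy m t ^ 2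
  + curv gx gy t *
    sum_f 1 m (fun r => (-1) ^ (r + 1) * k_s gx gy (m - r) t * k_s gx gy (m + r) t).

Definition L2norm (gx gy : R -> R) (T : R) (f : R -> R) : R :=
  sqrt (int_ds gx gy T (fun t => f t ^ 2)).

(* Main.v *)
Require Import Defs.
From Stdlib Require Import Reals Lra Lia.
From Coquelicot Require Import Coquelicot.
Open Scope R_scope.

Lemma amgm_bound c B X : 0 < c -> 0 <= B -> (forall a, 0 < a -> X <= (a * (c * c) + B / a) / 2) -> X <= c * sqrt B.
Proof.
  intros Hc HB H.
  destruct (Rlt_or_le 0 B) as [Bp|B0].
  - assert (sp : 0 < sqrt B) by (apply sqrt_lt_R0; auto).
    assert (sB := sqrt_sqrt B HB).
    assert (Ha : 0 < sqrt B / c) by (apply Rdiv_lt_0_compat; auto).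
    specialize (H _ Ha).
    assert (E : B / (sqrt B / c) = c * sqrt B).
    { rewrite <- sB at 1. field. split; lra. }
    rewrite E in H.
    replace ((sqrt B / c * (c * c) + c * sqrt B) / 2) with (c * sqrt B) in H by (field; lra). exact H.
  - assert (B = 0) by lra. subst B. rewrite sqrt_0, Rmult_0_r.
    destruct (Rle_or_lt X 0) as [Hx|Hx]; auto.
    assert (Ha : 0 < X / (c * c)) by (apply Rdiv_lt_0_compat; nra).
    specialize (H _ Ha).
    replace ((X / (c * c) * (c * c) + 0 / (X / (c * c))) / 2) with (X / 2) in H by (field; split; nra).
    lra.
Qed.

Section Curve.
Variables (gx gy : R -> R) (T : R).
Hypothesis HT : 0 < T.
Hypothesis Hx : smooth gx.
Hypothesis Hy : smooth gy.
Hypothesis Hper : forall t, gx (t + T) = gx t /\ gy (t + T) = gy t.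
Hypothesis Hsp : forall t, speed gx gy t <> 0.

Notation v := (speed gx gy).
Notation x1 := (Derive gx).
Notation y1 := (Derive gy).
Notation x2 := (Derive (Derive gx)).
Notation y2 := (Derive (Derive gy)).

Lemma exx1 t : ex_derive gx t.
Proof. exact (Hx 0%nat t). Qed.
Lemma exy1 t : ex_derive gy t.
Proof. exact (Hy 0%nat t). Qed.
Lemma exx2 t : ex_derive x1 t.
Proof. exact (Hx 1%nat t). Qed.
Lemma exy2 t : ex_derive y1 t.
Proof. exact (Hy 1%nat t). Qed.

Lemma Qpos t : 0 < x1 t ^ 2 + y1 t ^ 2.
Proof.
  assert (H := Hsp t). unfold speed in H.
  destruct (Req_dec (x1 t ^ 2 + y1 t ^ 2) 0) as [E|E].
  - rewrite E, sqrt_0 in H. lra.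
  - nra.
Qed.

Lemma vpos t : 0 < v t.
Proof. unfold speed. apply sqrt_lt_R0. apply Qpos. Qed.

Lemma vsq t : v t * v t = x1 t ^ 2 + y1 t ^ 2.
Proof. unfold speed. apply sqrt_sqrt. left; apply Qpos. Qed.

Lemma is_der_v t : is_derive v t ((x1 t * x2 t + y1 t * y2 t) / v t).
Proof.
  unfold speed at 1.
  replace ((x1 t * x2 t + y1 t * y2 t) / v t) with
    ((2 * x1 t * x2 t + 2 * y1 t * y2 t) / (2 * sqrt (x1 t ^ 2 + y1 t ^ 2))).
  2:{ unfold speed. field. apply Rgt_not_eq, sqrt_lt_R0, Qpos. }
  apply (is_derive_sqrt (fun u => x1 u ^ 2 + y1 u ^ 2)). 2: apply Qpos.
  auto_derive. split. apply exx2. split. apply exy2. auto. change (fun x : R => x1 x) with x1. change (fun x : R => y1 x) with y1. ring.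
Qed.

Lemma ex_der_v t : ex_derive v t.
Proof. eexists. apply is_der_v. Qed.
Lemma Der_v t : Derive v t = (x1 t * x2 t + y1 t * y2 t) / v t.
Proof. apply is_derive_unique, is_der_v. Qed.

Lemma Der_w t : Derive (fun t => / v t) t = (-1) * ((x1 t * x2 t + y1 t * y2 t) * (/ v t * (/ v t * / v t))).
Proof.
  rewrite Derive_inv. rewrite Der_v. field. apply Rgt_not_eq, vpos.
  apply ex_der_v. apply Rgt_not_eq, vpos.
Qed.

Inductive Pol : (R -> R) -> Prop :=
| Pdx n : Pol (Derive_n gx n)
| Pdy n : Pol (Derive_n gy n)
| Pv : Pol v
| Pw : Pol (fun t => / v t)
| Pc c : Pol (fun _ => c)
| Padd f g : Pol f -> Pol g -> Pol (fun t => f t + g t)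
| Pmul f g : Pol f -> Pol g -> Pol (fun t => f t * g t)
| Pext f g : Pol f -> (forall t, f t = g t) -> Pol g.

Lemma Pol_der f : Pol f -> (forall t, ex_derive f t) /\ Pol (Derive f).
Proof.
  induction 1.
  - split. intro t; apply Hx. exact (Pdx (S n)).
  - split. intro t; apply Hy. exact (Pdy (S n)).
  - split. apply ex_der_v.
    eapply Pext. 2:{ intro t. symmetry. apply Der_v. }
    apply Pmul. apply Padd; apply Pmul. exact (Pdx 1). exact (Pdx 2). exact (Pdy 1). exact (Pdy 2). exact Pw.
  - split. intro t. apply ex_derive_inv. apply ex_der_v. apply Rgt_not_eq, vpos.
    apply (Pext (fun t => (-1) * ((Derive_n gx 1 t * Derive_n gx 2 t + Derive_n gy 1 t * Derive_n gy 2 t) * (/ v t * (/ v t * / v t))))).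
    apply Pmul. apply Pc. apply Pmul. apply Padd; apply Pmul. exact (Pdx 1). exact (Pdx 2). exact (Pdy 1). exact (Pdy 2).
    apply Pmul. exact Pw. apply Pmul; exact Pw.
    intro t. rewrite Der_w. reflexivity.
  - split. intro t. apply ex_derive_const.
    eapply Pext. apply (Pc 0). intro t. symmetry. apply Derive_const.
  - destruct IHPol1 as [E1 D1], IHPol2 as [E2 D2]. split.
    intro t. apply (@ex_derive_plus R_AbsRing R_NormedModule f g); auto.
    eapply Pext. apply (Padd _ _ D1 D2). intro t. symmetry. apply Derive_plus; auto.
  - destruct IHPol1 as [E1 D1], IHPol2 as [E2 D2]. split.
    intro t. apply ex_derive_mult; auto.
    eapply Pext. apply (Padd _ _ (Pmul _ _ D1 H0) (Pmul _ _ H D2)). intro t. symmetry. apply Derive_mult; auto.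
  - destruct IHPol as [E1 D1]. split.
    intro t. eapply ex_derive_ext. apply H0. auto.
    eapply Pext. apply D1. intro t. apply Derive_ext. auto.
Qed.

Lemma Pol_ex f : Pol f -> forall t, ex_derive f t.
Proof. intros H; apply (Pol_der f H). Qed.
Lemma Pol_D f : Pol f -> Pol (Derive f).
Proof. intros H; apply (Pol_der f H). Qed.
Lemma Pol_cont f : Pol f -> forall t, continuous f t.
Proof. intros H t. apply (@ex_derive_continuous R_AbsRing R_NormedModule), Pol_ex, H. Qed.


Lemma Der_per h : (forall t, h (t + T) = h t) -> forall t, Derive h (t + T) = Derive h t.
Proof.
  intros Hh t. unfold Derive. f_equal. apply Lim_ext. intro e.
  replace (t + T + e) with ((t + e) + T) by ring. rewrite !Hh. reflexivity.
Qed.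

Lemma Dnx_per n : forall t, Derive_n gx n (t + T) = Derive_n gx n t.
Proof. induction n; simpl. intro; apply Hper. apply Der_per; auto. Qed.
Lemma Dny_per n : forall t, Derive_n gy n (t + T) = Derive_n gy n t.
Proof. induction n; simpl. intro; apply Hper. apply Der_per; auto. Qed.

Lemma v_per t : v (t + T) = v t.
Proof.
  unfold speed. rewrite (Der_per gx), (Der_per gy); auto; intro; apply Hper.
Qed.

Lemma Pol_per f : Pol f -> forall t, f (t + T) = f t.
Proof.
  induction 1; intro t.
  - apply Dnx_per.
  - apply Dny_per.
  - apply v_per.
  - rewrite v_per; auto.
  - auto.
  - rewrite IHPol1, IHPol2; auto.
  - rewrite IHPol1, IHPol2; auto.
  - rewrite <- !H0; auto.
Qed.

Notation D := (d_s gx gy).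
Notation Dn := (d_s_n gx gy).

Lemma Pol_ds f : Pol f -> Pol (D f).
Proof.
  intro H. unfold d_s. apply (Pext (fun t => Derive f t * / v t)).
  apply Pmul. apply Pol_D; auto. apply Pw. reflexivity.
Qed.

Lemma Pol_dsn n f : Pol f -> Pol (Dn n f).
Proof. intro H; induction n; simpl; auto. apply Pol_ds; auto. Qed.

Lemma ds_ext f g : (forall t, f t = g t) -> forall t, D f t = D g t.
Proof. intros H t. unfold d_s. rewrite (Derive_ext f g); auto. Qed.

Lemma dsn_ext n f g : (forall t, f t = g t) -> forall t, Dn n f t = Dn n g t.
Proof. intro H; induction n; simpl; auto. apply ds_ext; auto. Qed.

Lemma vne t : v t <> 0.
Proof. apply Rgt_not_eq, vpos. Qed.

Lemma ds_plus f g : Pol f -> Pol g -> forall t, D (fun u => f u + g u) t = D f t + D g t.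
Proof.
  intros Hf Hg t. unfold d_s. rewrite Derive_plus. field. apply vne.
  apply Pol_ex; auto. apply Pol_ex; auto.
Qed.

Lemma ds_mult f g : Pol f -> Pol g -> forall t, D (fun u => f u * g u) t = D f t * g t + f t * D g t.
Proof.
  intros Hf Hg t. unfold d_s. rewrite Derive_mult. field. apply vne.
  apply Pol_ex; auto. apply Pol_ex; auto.
Qed.

Lemma ds_const c t : D (fun _ => c) t = 0.
Proof. unfold d_s. rewrite Derive_const. field. apply vne. Qed.

Lemma ds_scal c f t : D (fun u => c * f u) t = c * D f t.
Proof. unfold d_s. rewrite Derive_scal. field. apply vne. Qed.

Lemma dsn_add a b f t : Dn (a + b) f t = Dn a (Dn b f) t.
Proof.
  revert t; induction a; intro t; simpl. reflexivity.
  apply ds_ext. auto.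
Qed.

Lemma dsn_S i f t : Dn i (D f) t = Dn (S i) f t.
Proof.
  replace (S i) with (i + 1)%nat by lia. rewrite dsn_add. reflexivity.
Qed.

Definition I f := int_ds gx gy T f.

Lemma I_ex f : Pol f -> ex_RInt (fun t => f t * v t) 0 T.
Proof.
  intro H. apply (@ex_RInt_continuous R_CompleteNormedModule). intros. apply (Pol_cont (fun t => f t * v t)).
  apply Pmul; auto. apply Pv.
Qed.

Lemma I_ext f g : (forall t, f t = g t) -> I f = I g.
Proof. intro H. unfold I, int_ds. apply RInt_ext. intros. rewrite H; auto. Qed.

Lemma I_plus f g : Pol f -> Pol g -> I (fun t => f t + g t) = I f + I g.
Proof.
  intros Hf Hg. unfold I, int_ds.
  transitivity (RInt (fun t => plus (f t * v t) (g t * v t)) 0 T).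
  apply RInt_ext. intros. unfold plus; simpl. ring.
  rewrite (@RInt_plus R_CompleteNormedModule). reflexivity. apply I_ex; auto. apply I_ex; auto.
Qed.

Lemma I_scal c f : Pol f -> I (fun t => c * f t) = c * I f.
Proof.
  intros Hf. unfold I, int_ds.
  transitivity (RInt (fun t => scal c (f t * v t)) 0 T).
  apply RInt_ext. intros. unfold scal; simpl. unfold mult; simpl. ring.
  rewrite (@RInt_scal R_CompleteNormedModule). reflexivity. apply I_ex; auto.
Qed.

Lemma I_ds f : Pol f -> I (D f) = 0.
Proof.
  intros Hf. unfold I, int_ds.
  transitivity (RInt (Derive f) 0 T).
  apply RInt_ext. intros x _. change (Derive f x / v x * v x = Derive f x). field. apply vne.
  rewrite RInt_Derive. replace T with (0 + T) at 1 by ring. rewrite Pol_per; auto. ring.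
  intros; apply Pol_ex; auto.
  intros; apply Pol_cont, Pol_D; auto.
Qed.

Lemma IBP f g : Pol f -> Pol g -> I (fun t => f t * D g t) = - I (fun t => D f t * g t).
Proof.
  intros Hf Hg.
  assert (H := I_ds (fun t => f t * g t) (Pmul _ _ Hf Hg)).
  rewrite (I_ext _ (fun t => D f t * g t + f t * D g t)) in H.
  rewrite I_plus in H. lra.
  apply Pmul; auto. apply Pol_ds; auto.
  apply Pmul; auto. apply Pol_ds; auto.
  apply ds_mult; auto.
Qed.

Lemma IBPn i : forall f g, Pol f -> Pol g ->
  I (fun t => f t * Dn i g t) = (-1) ^ i * I (fun t => Dn i f t * g t).
Proof.
  induction i; intros f g Hf Hg.
  - simpl. ring.
  - simpl (Dn (S i) g). rewrite IBP; auto. rewrite IHi; auto.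
    rewrite (I_ext (fun t => Dn i (D f) t * g t) (fun t => Dn (S i) f t * g t)).
    simpl. ring. intro t. rewrite dsn_S. reflexivity.
    apply Pol_ds; auto. apply Pol_dsn; auto.
Qed.

Fixpoint sumF (n : nat) (F : nat -> R -> R) (t : R) : R :=
  match n with O => 0 | S n => sumF n F t + F n t end.

Lemma Pol_sumF n F : (forall i, Pol (F i)) -> Pol (sumF n F).
Proof.
  intro H. induction n.
  - apply (Pext (fun _ => 0)). apply Pc. reflexivity.
  - apply (Pext (fun t => sumF n F t + F n t)). apply Padd; auto. reflexivity.
Qed.

Lemma ds_sumF n F : (forall i, Pol (F i)) -> forall t, D (sumF n F) t = sumF n (fun i => D (F i)) t.
Proof.
  intros H. induction n; intro t.
  - simpl. exact (ds_const 0 t).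
  - rewrite (ds_ext _ (fun u => sumF n F u + F n u)). rewrite ds_plus. rewrite IHn. reflexivity.
    apply Pol_sumF; auto. auto. reflexivity.
Qed.

Lemma sumF_shift n F t : sumF (S n) F t = F 0%nat t + sumF n (fun i => F (S i)) t.
Proof. induction n. simpl. ring. simpl. simpl in IHn. rewrite IHn. ring. Qed.

Lemma sumF_ext n F G t : (forall i, F i t = G i t) -> sumF n F t = sumF n G t.
Proof. intro H; induction n; simpl; auto. rewrite IHn, H; auto. Qed.

Lemma sumF_mult n F c t : c t * sumF n F t = sumF n (fun i u => c u * F i u) t.
Proof. induction n; simpl. ring. rewrite <- IHn. ring. Qed.

Lemma I_sumF n F G : (forall i, Pol (F i)) -> (forall i, Pol (G i)) ->
  (forall i, I (F i) = I (G i)) -> I (sumF n F) = I (sumF n G).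
Proof.
  intros HF HG H. induction n.
  - apply I_ext. reflexivity.
  - rewrite (I_ext (sumF (S n) F) (fun t => sumF n F t + F n t)) by reflexivity.
    rewrite (I_ext (sumF (S n) G) (fun t => sumF n G t + G n t)) by reflexivity.
    rewrite !I_plus; try apply Pol_sumF; auto. rewrite IHn, H. reflexivity.
Qed.

Lemma Pol_x1 : Pol x1.
Proof. exact (Pdx 1). Qed.
Lemma Pol_y1 : Pol y1.
Proof. exact (Pdy 1). Qed.
Lemma Pol_gx : Pol gx.
Proof. exact (Pdx 0). Qed.
Lemma Pol_gy : Pol gy.
Proof. exact (Pdy 0). Qed.
Lemma Pol_opp f : Pol f -> Pol (fun t => - f t).
Proof. intro H. apply (Pext (fun t => (-1) * f t)). apply Pmul; auto. apply Pc. intro; ring. Qed.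
Lemma Pol_minus f g : Pol f -> Pol g -> Pol (fun t => f t - g t).
Proof. intros. apply (Pext (fun t => f t + - g t)). apply Padd; auto. apply Pol_opp; auto. intro; ring. Qed.

Definition tx t := x1 t / v t.
Definition ty t := y1 t / v t.
Definition k := curv gx gy.
Definition pp t := (gx t - gx 0) * (- ty t) + (gy t - gy 0) * tx t.
Definition qq t := (gx t - gx 0) * tx t + (gy t - gy 0) * ty t.

Lemma Pol_tx : Pol tx.
Proof. apply (Pext (fun t => x1 t * / v t)). apply Pmul. apply Pol_x1. apply Pw. reflexivity. Qed.
Lemma Pol_ty : Pol ty.
Proof. apply (Pext (fun t => y1 t * / v t)). apply Pmul. apply Pol_y1. apply Pw. reflexivity. Qed.
Lemma Pol_k : Pol k.
Proof.
  apply (Pext (fun t => (Derive_n gx 1 t * Derive_n gy 2 t - Derive_n gy 1 t * Derive_n gx 2 t) * (/ v t * (/ v t * / v t)))).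
  apply Pmul. apply Pol_minus; apply Pmul; constructor. apply Pmul. apply Pw. apply Pmul; apply Pw.
  intro t. unfold k, curv. change (Derive_n gx 1 t) with (x1 t); change (Derive_n gx 2 t) with (x2 t); change (Derive_n gy 1 t) with (y1 t); change (Derive_n gy 2 t) with (y2 t). field. apply vne.
Qed.

Hint Resolve Pol_x1 Pol_y1 Pol_gx Pol_gy Pol_opp Pol_minus Pol_tx Pol_ty Pol_k Padd Pmul Pc Pv Pw Pol_ds Pol_dsn : pol.

Lemma Pol_pp : Pol pp.
Proof. unfold pp. auto 10 with pol. Qed.
Lemma Pol_qq : Pol qq.
Proof. unfold qq. auto 10 with pol. Qed.
Hint Resolve Pol_pp Pol_qq : pol.

Lemma ds_x1 t : D x1 t = x2 t / v t.
Proof. reflexivity. Qed.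

Lemma ds_w t : D (fun t => / v t) t = (-1) * ((x1 t * x2 t + y1 t * y2 t) * (/ v t * (/ v t * / v t))) / v t.
Proof. unfold d_s. rewrite Der_w. reflexivity. Qed.

Lemma ds_tx t : D tx t = k t * (- ty t).
Proof.
  rewrite (ds_ext tx (fun t => x1 t * / v t)) by reflexivity.
  rewrite ds_mult; auto with pol. rewrite ds_x1, ds_w. unfold k, curv, ty.
  change (Derive_n gy 2 t) with (y2 t); change (Derive_n gx 2 t) with (x2 t).
  apply Rminus_diag_uniq.
  match goal with |- ?a - ?b = 0 =>
    replace (a - b) with (x2 t * (v t * v t - (x1 t ^ 2 + y1 t ^ 2)) / v t ^ 4) end.
  rewrite vsq. field. apply vne. field. apply vne.
Qed.

Lemma ds_ty t : D ty t = k t * tx t.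
Proof.
  rewrite (ds_ext ty (fun t => y1 t * / v t)) by reflexivity.
  rewrite ds_mult; auto with pol. rewrite ds_w. unfold k, curv, tx.
  change (D y1 t) with (y2 t / v t).
  change (Derive_n gy 2 t) with (y2 t); change (Derive_n gx 2 t) with (x2 t).
  apply Rminus_diag_uniq.
  match goal with |- ?a - ?b = 0 =>
    replace (a - b) with (y2 t * (v t * v t - (x1 t ^ 2 + y1 t ^ 2)) / v t ^ 4) end.
  rewrite vsq. field. apply vne. field. apply vne.
Qed.

Lemma ds_X c t : D (fun u => gx u - c) t = tx t.
Proof. unfold d_s, tx. rewrite Derive_minus, Derive_const. f_equal. ring. apply exx1. apply ex_derive_const. Qed.
Lemma ds_Y c t : D (fun u => gy u - c) t = ty t.
Proof. unfold d_s, ty. rewrite Derive_minus, Derive_const. f_equal. ring. apply exy1. apply ex_derive_const. Qed.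

Lemma ds_opp f t : D (fun u => - f u) t = - D f t.
Proof. unfold d_s. rewrite Derive_opp. field. apply vne. Qed.

Lemma txty t : tx t * tx t + ty t * ty t = 1.
Proof. unfold tx, ty. assert (H := vsq t). assert (H2 := vne t). field_simplify; auto. rewrite <- H. field. auto. Qed.

Lemma ds_pp t : D pp t = - k t * qq t.
Proof.
  unfold pp at 1. rewrite ds_plus; auto with pol. rewrite !ds_mult; auto with pol.
  rewrite ds_X, ds_Y, ds_opp, ds_tx, ds_ty. unfold qq. ring.
Qed.

Lemma ds_qq t : D qq t = 1 + k t * pp t.
Proof.
  unfold qq at 1. rewrite ds_plus; auto with pol. rewrite !ds_mult; auto with pol.
  rewrite ds_X, ds_Y, ds_tx, ds_ty. unfold pp. rewrite <- (txty t). ring.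
Qed.

Notation kk := (k_s gx gy).
Lemma Pol_kk j : Pol (kk j).
Proof. apply Pol_dsn, Pol_k. Qed.
Hint Resolve Pol_kk : pol.

Definition Lp t := D (D pp) t + k t * k t * pp t.
Definition Gt j i := fun u => k u * pp u * kk (j - i) u.
Definition Term j t := Dn j Lp t + sumF j (fun i => Dn i (Gt j i)) t + qq t * kk (S j) t.

Lemma Pol_Lp : Pol Lp.
Proof. unfold Lp. auto 10 with pol. Qed.
Lemma Pol_Gt j i : Pol (Gt j i).
Proof. unfold Gt. auto 10 with pol. Qed.
Hint Resolve Pol_Lp Pol_Gt : pol.

Lemma DDpp t : D (D pp) t = - (kk 1 t * qq t + k t * (1 + k t * pp t)).
Proof.
  rewrite (ds_ext (D pp) (fun u => (- k u) * qq u)) by (intro; rewrite ds_pp; ring).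
  rewrite ds_mult; auto with pol. rewrite ds_opp, ds_qq. change (D k t) with (kk 1 t). ring.
Qed.

Lemma Term_eq j : forall t, Term j t = - INR (S j) * kk j t.
Proof.
  induction j; intro t.
  - unfold Term. simpl sumF. simpl (Dn 0 Lp t). unfold Lp. rewrite DDpp.
    change (kk 0 t) with (k t). simpl INR. ring.
  - assert (HD : D (Term j) t = - INR (S j) * kk (S j) t).
    { rewrite (ds_ext _ _ IHj). rewrite ds_scal. reflexivity. }
    unfold Term in HD.
    rewrite ds_plus in HD; auto with pol.
    2:{ apply Padd; auto with pol. apply Pol_sumF; auto with pol. }
    rewrite ds_plus in HD; auto with pol.
    2:{ apply Pol_sumF; auto with pol. }
    rewrite ds_mult in HD; auto with pol.
    rewrite ds_sumF in HD; auto with pol.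
    rewrite ds_qq in HD.
    unfold Term. rewrite sumF_shift.
    change (D (Dn j Lp) t) with (Dn (S j) Lp t) in HD.
    change (D (kk (S j)) t) with (kk (S (S j)) t) in HD.
    change (sumF j (fun i => Dn (S i) (Gt (S j) (S i))) t) with (sumF j (fun i => D (Dn i (Gt j i))) t).
    change (Dn 0 (Gt (S j) 0) t) with (k t * pp t * kk (S j) t).
    rewrite (S_INR (S j)). lra.
Qed.

Lemma Pol_sumF' n F : (forall i, Pol (F i)) -> Pol (sumF n F).
Proof. apply Pol_sumF. Qed.
Ltac polt := repeat (first [ assumption | exact (Pol_kk _) | exact Pol_k | exact Pol_pp | exact Pol_qq | exact Pol_Lp | exact (Pol_Gt _ _) | exact Pv | exact Pw | exact (Pc _) | apply Pol_ds | apply Pol_dsn | apply Pol_sumF; intro | apply Padd | apply Pmul | apply Pol_opp | apply Pol_minus ]).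

Lemma St1 m : I (fun t => kk m t * Term m t) = - INR (S m) * I (fun t => kk m t * kk m t).
Proof.
  rewrite (I_ext _ (fun t => (- INR (S m)) * (kk m t * kk m t))).
  apply I_scal; polt. intro; rewrite Term_eq. ring.
Qed.

Lemma St2 m : I (fun t => kk m t * Term m t) = I (fun t => kk m t * Dn m Lp t)
  + I (fun t => kk m t * sumF m (fun i => Dn i (Gt m i)) t) + I (fun t => kk m t * qq t * kk (S m) t).
Proof.
  rewrite (I_ext _ (fun t => (kk m t * Dn m Lp t + kk m t * sumF m (fun i => Dn i (Gt m i)) t) + kk m t * qq t * kk (S m) t))
    by (intro; unfold Term; ring).
  rewrite !I_plus; try reflexivity; polt.
Qed.

Lemma St3 m : I (fun t => kk m t * Dn m Lp t) =
  (-1) ^ m * (I (fun t => kk (S (S (m + m))) t * pp t) + I (fun t => k t * k t * kk (m + m) t * pp t)).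
Proof.
  rewrite IBPn; polt. f_equal.
  rewrite (I_ext _ (fun t => kk (m + m) t * Dn 2 pp t + (k t * k t * kk (m + m) t * pp t))).
  rewrite I_plus; polt. rewrite IBPn; polt. replace ((-1) ^ 2) with 1 by ring. rewrite Rmult_1_l.
  apply Rplus_eq_compat_r. apply I_ext. intro. reflexivity.
  intro t. unfold Lp. unfold k_s. rewrite dsn_add. simpl. ring.
Qed.

Lemma St4 m : I (fun t => kk m t * sumF m (fun i => Dn i (Gt m i)) t) =
  I (sumF m (fun i u => (-1) ^ i * (kk (i + m) u * Gt m i u))).
Proof.
  rewrite (I_ext _ (sumF m (fun i u => kk m u * Dn i (Gt m i) u))) by (intro; apply (sumF_mult m _ (kk m))).
  apply I_sumF; [intro; polt | intro; polt | intro i]. rewrite IBPn; polt.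
  rewrite <- I_scal; polt. apply I_ext. intro t. unfold k_s. rewrite dsn_add. reflexivity.
Qed.

Lemma St5 m : 2 * I (fun t => kk m t * qq t * kk (S m) t) =
  - I (fun t => kk m t * kk m t) - I (fun t => k t * pp t * kk m t * kk m t).
Proof.
  assert (H := IBP (fun t => kk m t * qq t) (kk m) ltac:(polt) ltac:(polt)). cbv beta in H.
  rewrite (I_ext (fun t => kk m t * qq t * D (kk m) t) (fun t => kk m t * qq t * kk (S m) t)) in H by reflexivity.
  rewrite (I_ext (fun t => D (fun t0 => kk m t0 * qq t0) t * kk m t)
     (fun t => (kk m t * qq t * kk (S m) t + kk m t * kk m t) + k t * pp t * kk m t * kk m t)) in H.
  rewrite !I_plus in H; polt. lra.
  intro t. rewrite ds_mult; polt. rewrite ds_qq. change (D (kk m) t) with (kk (S m) t). ring.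
Qed.

Lemma sum_f_sumF g n t : sum_f_R0 g n = sumF (S n) (fun i _ => g i) t.
Proof. induction n. simpl. ring. simpl. rewrite IHn. reflexivity. Qed.

Lemma sumF_mult_r n F c t : sumF n F t * c t = sumF n (fun i u => F i u * c u) t.
Proof. induction n; simpl. ring. rewrite <- IHn. ring. Qed.

Lemma St6 m' : I (fun t => Kop gx gy (S m') t * pp t) =
  (-1) ^ (S m' + 1) * I (fun t => kk (S (S (S m' + S m'))) t * pp t)
  - / 2 * I (fun t => k t * pp t * kk (S m') t * kk (S m') t)
  + I (sumF (S m') (fun i u => k u * ((-1) ^ (i + 1 + 1) * kk (S m' - (i + 1)) u * kk (S m' + (i + 1)) u) * pp u)).
Proof.
  rewrite (I_ext _ (fun t => ((-1) ^ (S m' + 1) * (kk (S (S (S m' + S m'))) t * pp t)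
     + (- / 2) * (k t * pp t * kk (S m') t * kk (S m') t))
     + sumF (S m') (fun i u => k u * ((-1) ^ (i + 1 + 1) * kk (S m' - (i + 1)) u * kk (S m' + (i + 1)) u) * pp u) t)).
  rewrite !I_plus; polt. rewrite !I_scal; polt. ring.
  intro t. unfold Kop. unfold sum_f.
  replace (S m' - 1)%nat with m' by lia.
  rewrite (sum_f_sumF _ _ t). rewrite sumF_mult.
  replace (2 * S m' + 2)%nat with (S (S (S m' + S m'))) by lia.
  change (curv gx gy) with k.
  match goal with |- (_ + sumF _ ?F t) * _ = _ + sumF _ ?G t =>
    assert (HS : sumF (S m') F t * pp t = sumF (S m') G t) by (rewrite sumF_mult_r; apply sumF_ext; intro; reflexivity) end.
  rewrite <- HS. ring.
Qed.

Lemma main_id m' : I (fun t => Kop gx gy (S m') t * pp t) = INR (2 * S m' + 1) * energy gx gy T (S m').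
Proof.
  assert (h1 := St1 (S m')). assert (h2 := St2 (S m')). assert (h3 := St3 (S m')).
  assert (h4 := St4 (S m')). assert (h5 := St5 (S m')). assert (h6 := St6 m').
  set (H := fun i u => (-1) ^ i * (kk (i + S m') u * Gt (S m') i u)) in *.
  assert (h4' : I (sumF (S m') H) = I (fun t => k t * pp t * kk (S m') t * kk (S m') t) + I (sumF m' (fun i => H (S i)))).
  { rewrite (I_ext _ (fun t => H 0%nat t + sumF m' (fun i => H (S i)) t)) by (intro; apply sumF_shift).
    rewrite I_plus; unfold H; polt. apply Rplus_eq_compat_r. apply I_ext. intro t. unfold Gt. simpl. ring. }
  assert (h6' : I (sumF (S m') (fun i u => k u * ((-1) ^ (i + 1 + 1) * kk (S m' - (i + 1)) u * kk (S m' + (i + 1)) u) * pp u))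
     = (-1) * I (sumF m' (fun i => H (S i))) + (-1) ^ (S m' + 1) * I (fun t => k t * k t * kk (S m' + S m') t * pp t)).
  { rewrite (I_ext _ (fun t => (-1) * sumF m' (fun i => H (S i)) t + (-1) ^ (S m' + 1) * (k t * k t * kk (S m' + S m') t * pp t))).
    rewrite I_plus; unfold H; polt. rewrite !I_scal; unfold H; polt. reflexivity.
    intro t. change (sumF (S m') ?F t) with (sumF m' F t + F m' t).
    rewrite (sumF_mult m' _ (fun _ => -1)). f_equal.
    - apply sumF_ext. intro i. unfold H, Gt.
      replace (i + 1 + 1)%nat with (S (S i)) by lia. replace (i + 1)%nat with (S i) by lia.
      rewrite (Nat.add_comm (S m') (S i)). simpl pow. simpl Nat.sub. ring.
    - replace (S m' - (m' + 1))%nat with 0%nat by lia. replace (S m' + (m' + 1))%nat with (S m' + S m')%nat by lia.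
      replace (m' + 1 + 1)%nat with (S m' + 1)%nat by lia. change (kk 0 t) with (k t). ring. }
  unfold energy. fold (I (fun t => kk (S m') t ^ 2)).
  rewrite (I_ext (fun t => kk (S m') t ^ 2) (fun t => kk (S m') t * kk (S m') t)) by (intro; ring).
  rewrite h6, h6'. rewrite h2, h3, h4, h4' in h1.
  rewrite plus_INR, mult_INR. rewrite S_INR in *. rewrite pow_add in *.
  set (sg := (-1) ^ S m') in *.
  set (A := I (fun t => kk (S m') t * kk (S m') t)) in *.
  set (B := I (fun t => kk (S (S (S m' + S m'))) t * pp t)) in *.
  set (C := I (fun t => k t * k t * kk (S m' + S m') t * pp t)) in *.
  set (E := I (fun t => k t * pp t * kk (S m') t * kk (S m') t)) in *.
  set (X := I (fun t => kk (S m') t * qq t * kk (S (S m')) t)) in *.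
  set (Sp := I (sumF m' (fun i => H (S i)))) in *.
  simpl (INR 2). simpl ((-1) ^ 1).
  change (INR 1) with 1. set (n := INR (S m')) in *. nra.
Qed.

Lemma RInt_opp' f a b : ex_RInt f a b -> RInt (fun x => - f x) a b = - RInt f a b.
Proof.
  intro H. transitivity (RInt (fun x => opp (f x)) a b). reflexivity.
  rewrite (@RInt_opp R_CompleteNormedModule). reflexivity. exact H.
Qed.

Lemma ex_RInt_Pol f a b : Pol f -> ex_RInt f a b.
Proof. intro H. apply (@ex_RInt_continuous R_CompleteNormedModule). intros. apply Pol_cont; auto. Qed.

Lemma pp_bound t0 : 0 <= t0 <= T -> pp t0 * pp t0 <= length gx gy T * length gx gy T.
Proof.
  intros [H0 H1].
  set (e1 := - ty t0). set (e2 := tx t0).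
  assert (He : e1 * e1 + e2 * e2 = 1) by (unfold e1, e2; rewrite <- (txty t0); ring).
  set (h := fun u => e1 * gx u + e2 * gy u).
  assert (Ph : Pol h) by (unfold h; apply Padd; apply Pmul; auto with pol).
  assert (Hh : pp t0 = RInt (Derive h) 0 t0).
  { rewrite RInt_Derive. unfold pp, h. fold e1 e2. ring.
    intros; apply Pol_ex; auto. intros; apply Pol_cont, Pol_D; auto. }
  assert (HD : forall u, Derive h u = e1 * x1 u + e2 * y1 u).
  { intro u. unfold h. rewrite Derive_plus, !Derive_scal. reflexivity.
    apply ex_derive_scal, exx1. apply ex_derive_scal, exy1. }
  assert (Hb : forall u, - v u <= Derive h u <= v u).
  { intro u. rewrite HD. assert (V := vsq u). assert (P := vpos u).
    assert (Q : (e1 * x1 u + e2 * y1 u) ^ 2 <= v u * v u).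
    { rewrite V. assert (0 <= (e1 * y1 u - e2 * x1 u) ^ 2) by apply pow2_ge_0. nra. }
    split; nra. }
  assert (E1 : RInt (Derive h) 0 t0 <= RInt v 0 t0).
  { apply RInt_le; auto. apply ex_RInt_Pol, Pol_D; auto. apply ex_RInt_Pol, Pv.
    intros; apply Hb. }
  assert (E2 : - RInt v 0 t0 <= RInt (Derive h) 0 t0).
  { rewrite <- RInt_opp'. apply RInt_le; auto. apply ex_RInt_Pol. apply Pol_opp, Pv.
    apply ex_RInt_Pol, Pol_D; auto. intros; apply Hb. apply ex_RInt_Pol, Pv. }
  assert (E3 : 0 <= RInt v 0 t0).
  { apply RInt_ge_0; auto. apply ex_RInt_Pol, Pv. intros; left; apply vpos. }
  assert (E4 : 0 <= RInt v t0 T).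
  { apply RInt_ge_0; auto. apply ex_RInt_Pol, Pv. intros; left; apply vpos. }
  assert (E5 : plus (RInt v 0 t0) (RInt v t0 T) = RInt v 0 T).
  { apply (@RInt_Chasles R_CompleteNormedModule); apply ex_RInt_Pol, Pv. }
  change plus with Rplus in E5. simpl in E5.
  unfold length. rewrite Hh. nra.
Qed.

Lemma L_pos : 0 < length gx gy T.
Proof.
  unfold length. apply RInt_gt_0; auto. intros; apply vpos. intros; apply Pol_cont, Pv.
Qed.

Lemma I_one : I (fun _ => 1) = length gx gy T.
Proof. unfold I, int_ds, length. apply RInt_ext. intros. change (1 * v x = v x). ring. Qed.

Lemma Kop_eq m' t : Kop gx gy (S m') t = (-1) ^ (S m' + 1) * kk (S (S (S m' + S m'))) t
  + (- / 2) * (k t * (kk (S m') t * kk (S m') t))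
  + sumF (S m') (fun i u => k u * ((-1) ^ (i + 1 + 1) * kk (S m' - (i + 1)) u * kk (S m' + (i + 1)) u)) t.
Proof.
  unfold Kop, sum_f. replace (S m' - 1)%nat with m' by lia.
  rewrite (sum_f_sumF _ _ t). rewrite sumF_mult.
  replace (2 * S m' + 2)%nat with (S (S (S m' + S m'))) by lia.
  change (curv gx gy) with k.
  match goal with |- _ + sumF _ ?F t = _ + sumF _ ?G t =>
    assert (HS : sumF (S m') F t = sumF (S m') G t) by (apply sumF_ext; intro; reflexivity) end.
  rewrite HS. ring.
Qed.

Lemma Pol_Kop m' : Pol (Kop gx gy (S m')).
Proof.
  eapply Pext. 2:{ intro t. symmetry. apply Kop_eq. }
  polt.
Qed.

Lemma final m' : energy gx gy T (S m') <=
  / INR (2 * S m' + 1) * Rpower (length gx gy T) (3 / 2) * L2norm gx gy T (Kop gx gy (S m')).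
Proof.
  assert (Hid := main_id m').
  assert (PK := Pol_Kop m').
  assert (LP := L_pos).
  set (L := length gx gy T) in *.
  set (K := Kop gx gy (S m')) in *.
  set (Bv := I (fun t => K t * K t)).
  assert (L2 : L2norm gx gy T K = sqrt Bv).
  { unfold L2norm. f_equal. apply I_ext. intro; ring. }
  assert (HB : 0 <= Bv).
  { unfold Bv, I, int_ds. apply RInt_ge_0. lra. apply ex_RInt_Pol. polt.
    intros x _. assert (P := vpos x). change (0 <= K x * K x * v x).
    apply Rmult_le_pos. nra. lra. }
  assert (SL := sqrt_sqrt L (Rlt_le _ _ LP)).
  assert (Hbound : forall a, 0 < a -> I (fun t => K t * pp t) <= (a * ((L * sqrt L) * (L * sqrt L)) + Bv / a) / 2).
  { intros a Ha.
    apply Rle_trans with (I (fun t => (a * (L * L) / 2) * 1 + / (2 * a) * (K t * K t))).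
    - unfold I, int_ds. apply RInt_le. lra. apply ex_RInt_Pol. polt. apply ex_RInt_Pol. polt.
      intros x [hx1 hx2]. assert (pb := pp_bound x (conj (Rlt_le _ _ hx1) (Rlt_le _ _ hx2))).
      fold L in pb. assert (P := vpos x).
      apply Rmult_le_compat_r. lra.
      apply Rmult_le_reg_l with (2 * a). lra.
      replace (2 * a * (a * (L * L) / 2 * 1 + / (2 * a) * (K x * K x))) with (a * a * (L * L) + K x * K x) by (field; lra).
      assert (h1 : 2 * a * (K x * pp x) <= a * a * (pp x * pp x) + K x * K x).
      { assert (0 <= (a * pp x - K x) ^ 2) by apply pow2_ge_0. nra. }
      assert (h2 : a * a * (pp x * pp x) <= a * a * (L * L)).
      { apply Rmult_le_compat_l. nra. exact pb. }
      lra.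
    - rewrite I_plus; polt. rewrite !I_scal; polt. rewrite I_one. fold L. fold Bv.
      replace ((L * sqrt L) * (L * sqrt L)) with (L * L * (sqrt L * sqrt L)) by ring. rewrite SL.
      apply Req_le. field. lra. }
  assert (SP : 0 < sqrt L) by (apply sqrt_lt_R0; lra).
  assert (Hc := amgm_bound (L * sqrt L) Bv _ ltac:(nra) HB Hbound).
  rewrite Hid in Hc.
  replace (3 / 2) with (1 + / 2) by field.
  rewrite Rpower_plus, Rpower_1, Rpower_sqrt by lra.
  rewrite L2.
  assert (NP : 0 < INR (2 * S m' + 1)) by (apply lt_0_INR; lia).
  apply Rmult_le_reg_l with (INR (2 * S m' + 1)). lra.
  replace (INR (2 * S m' + 1) * (/ INR (2 * S m' + 1) * (L * sqrt L) * sqrt Bv)) with (L * sqrt L * sqrt Bv) by (field; lra).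
  exact Hc.
Qed.

End Curve.

Theorem mainTheorem6 (m : nat) (gx gy : R -> R) (T : R) :
  (1 <= m)%nat ->
  closed_immersed_smooth_curve gx gy T ->
  energy gx gy T m <=
    / INR (2 * m + 1) * Rpower (length gx gy T) (3 / 2)
    * L2norm gx gy T (Kop gx gy m).
Proof.
  intros Hm [HT [Hx [Hy [Hper Hsp]]]].
  destruct m as [|m']. lia.
  apply final; auto.
Qed.
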